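(* Let $a\in K$ and assume the conjugacy class $\Delta(a)$ is $(\sigma,\delta)$-algebraic. Then a nonzero skew polynomial $P(T)\in K[T;\sigma,\delta]$ belongs to $S(a)$ if and only if $P(c)\neq0$ for all $c\in\Delta(a)$. In particular, $S(a)^{-1}K[T;\sigma,\delta]=Def(a)$.
   Context: Let $K$ be a skew field, $K^*=K\setminus\{0\}$, $\sigma\colon K\to K$ a ring endomorphism and $\delta\colon K\to K$ a $\sigma$-derivation. $R=K[T;\sigma,\delta]$ is the skew polynomial ring with $Ta=\sigma(a)T+\delta(a)$. The $(\sigma,\delta)$-action of $K^*$ on $K$ is ${}^{b}a=\sigma(b)ab^{-1}+\delta(b)b^{-1}$; $\Delta(a)=\{{}^{b}a:b\in K^*\}$. For $P\in R$, $P(a)$ is the unique element of $K$ with $P(T)-P(a)\in R(T-a)$. $\Delta(a)$ is $(\sigma,\delta)$-algebraic if some nonzero $P\in R$ satisfies $P(c)=0$ for all $c\in\Delta(a)$. For a set $Z$ with a $K^*$-action, the skew product of functions $Z\to K$ is $(f\diamond g)(z)=f({}^{g(z)}z)g(z)$ if $g(z)\neq0$, $0$ otherwise; $f$ is skew invertible if some $g$ satisfies $f\diamond g=g\diamond f=1$. $K(T;\sigma,\delta)$ is the division ring of left fractions of $R$; each $f$ has a unique minimal representation $P^{-1}Q$ with $P$ monic of least degree; $f$ is defined at $a$ if $c\mapsto P(c)$ on $\Delta(a)$ is skew invertible. $Def(a)$ is the set of skew rational functions defined at $a$. A left Ore subset of $R$ is a multiplicatively closed $S\subseteq R\setminus\{0\}$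 with $1\in S$ such that $Sr\cap Rs\neq\emptyset$ for all $s\in S,r\in R$. $S(a)$ is the unique left Ore subset of $R$ maximal among left Ore subsets $S$ such that for every $P\in S$ and every monic irreducible $Q$ with $P=Q_1QQ_2$ ($Q_1,Q_2\in R$), $Q^{-1}\in Def(a)$. *)

(* Defs.v *)
From HB Require Import structures.
From mathcomp Require Import all_boot all_order all_algebra.
From Stdlib Require Import ClassicalEpsilon.
Set Implicit Arguments. Unset Strict Implicit. Unset Printing Implicit Defensive.
Import Order.TTheory GRing.Theory.
Local Open Scope ring_scope.

Section SkewPoly.
Variable K : unitRingType.
Variable sigma : {rmorphism K -> K}.
Variable delta : K -> K.

(* Skew polynomials are represented by their coefficient lists
   (the carrier {poly K}, sum_i a_i T^i with coefficients on the left);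
   the additive structure is that of {poly K}, the multiplication is the
   skew one, determined by  T a = sigma(a) T + delta(a). *)

(* left multiplication by T : T * (sum_j b_j T^j) = sum_j (sigma b_j T^(j+1) + delta b_j T^j) *)
Definition mulT (Q : {poly K}) : {poly K} := map_poly sigma Q * 'X + map_poly delta Q.

Definition smul (P Q : {poly K}) : {poly K} :=
  \sum_(i < size P) P`_i *: iter i mulT Q.

Definition seval (P : {poly K}) (a : K) : K :=
  epsilon (inhabits 0) (fun c => exists Q : {poly K}, P - c%:P = smul Q ('X - a%:P)).

Definition sdact (b a : K) : K := sigma b * a * b^-1 + delta b * b^-1.

Definition inDelta (a c : K) : Prop := exists b : K, b != 0 /\ c = sdact b a.

Definition sd_algebraic (a : K) : Prop :=
  exists P : {poly K}, P != 0 /\ forall c, inDelta a c -> seval P c = 0.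

(* skew product of functions Delta(a) -> K (functions represented on K,
   only their values on Delta(a) matter) *)
Definition skew_prod (f g : K -> K) (z : K) : K :=
  if g z != 0 then f (sdact (g z) z) * g z else 0.

Definition skew_invertible (a : K) (f : K -> K) : Prop :=
  exists g : K -> K, forall z, inDelta a z ->
    skew_prod f g z = 1 /\ skew_prod g f z = 1.

(* Left fractions P^-1 Q (P <> 0) and their equality in K(T;sigma,delta) *)
Definition frac_eq (PQ PQ' : {poly K} * {poly K}) : Prop :=
  exists u u' : {poly K},
    smul u PQ.1 = smul u' PQ'.1 /\ smul u PQ.1 != 0 /\ smul u PQ.2 = smul u' PQ'.2.

Definition minimal_rep (P Q P0 Q0 : {poly K}) : Prop :=
  P0 \is monic /\ frac_eq (P0, Q0) (P, Q) /\
  forall P1 Q1 : {poly K}, P1 != 0 -> frac_eq (P1, Q1) (P, Q) -> (size P0 <= size P1)%N.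

Definition defined_at (a : K) (P Q : {poly K}) : Prop :=
  exists P0 Q0 : {poly K}, minimal_rep P Q P0 Q0 /\ skew_invertible a (seval P0).

Definition sunit (U : {poly K}) : Prop :=
  exists V : {poly K}, smul U V = 1 /\ smul V U = 1.

Definition sirreducible (Q : {poly K}) : Prop :=
  Q != 0 /\ ~ sunit Q /\ forall A B : {poly K}, Q = smul A B -> sunit A \/ sunit B.

Definition left_Ore (S : {poly K} -> Prop) : Prop :=
  S 1 /\ (forall s, S s -> s != 0) /\
  (forall s t, S s -> S t -> S (smul s t)) /\
  (forall s r, S s -> exists s' r', S s' /\ smul s' r = smul r' s).

Definition irr_factors_defined (a : K) (S : {poly K} -> Prop) : Prop :=
  forall P, S P -> forall Q Q1 Q2 : {poly K},
    Q \is monic -> sirreducible Q -> P = smul (smul Q1 Q) Q2 -> defined_at a Q 1.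

(* S is a maximal left Ore subset with the above property (i.e. S = S(a)) *)
Definition is_Sa (a : K) (S : {poly K} -> Prop) : Prop :=
  left_Ore S /\ irr_factors_defined a S /\
  forall S' : {poly K} -> Prop, left_Ore S' -> irr_factors_defined a S' ->
    (forall P, S P -> S' P) -> forall P, S' P -> S P.

End SkewPoly.

(* Main.v *)
Require Import Defs.
From HB Require Import structures.
From mathcomp Require Import all_boot all_order all_algebra.
From Stdlib Require Import ClassicalEpsilon Classical.
From mathcomp Require Import zify.
Import GRing.Theory.
Local Open Scope ring_scope.
Set Implicit Arguments. Unset Strict Implicit. Unset Printing Implicit Defensive.

Section Skew.
Variable K : unitRingType.
Hypothesis K_skewfield : forall x : K, x != 0 -> x \is a GRing.unit.
Variable sigma : {rmorphism K -> K}.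
Variable delta : K -> K.
Hypothesis delta_add : forall x y : K, delta (x + y) = delta x + delta y.
Hypothesis delta_mul : forall x y : K, delta (x * y) = sigma x * delta y + delta x * y.

Implicit Types (P Q U p q g r W f s t B : {poly K}) (k c e : K).

Local Notation mT := (mulT sigma delta).
Local Notation sm := (smul sigma delta).
Local Notation iterT i := (iter i mT).

Lemma delta0 : delta 0 = 0.
Proof.
have h := delta_add 0 0; rewrite addr0 in h.
by apply: (@addrI _ (delta 0)); rewrite addr0 -h.
Qed.

Lemma delta1 : delta 1 = 0.
Proof.
have h := delta_mul 1 1; rewrite mulr1 rmorph1 mul1r mulr1 in h.
by apply: (@addrI _ (delta 1)); rewrite addr0 -h.
Qed.

Lemma deltaN x : delta (- x) = - delta x.
Proof.
have h := delta_add x (- x); rewrite subrr delta0 in h.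
by apply: (@addrI _ (delta x)); rewrite -h subrr.
Qed.

Lemma deltaB x y : delta (x - y) = delta x - delta y.
Proof. by rewrite delta_add deltaN. Qed.

Lemma unitK (x : K) : x != 0 -> x \is a GRing.unit. Proof. exact: K_skewfield. Qed.

Lemma mulf_neq0K (x y : K) : x != 0 -> y != 0 -> x * y != 0.
Proof.
move=> hx hy; apply/eqP => h; move/eqP: hy; apply.
by rewrite -(mulKr (unitK hx) y) h mulr0.
Qed.

Lemma invr_neq0K (x : K) : x != 0 -> x^-1 != 0.
Proof.
move=> hx; apply/eqP => h.
have := divrr (unitK hx); rewrite h mulr0 => /eqP; rewrite eq_sym oner_eq0.
by [].
Qed.

Lemma sigma_neq0 x : x != 0 -> sigma x != 0.
Proof.
move=> hx; apply/eqP => h.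
have := rmorph_unit sigma (unitK hx); by rewrite h unitr0.
Qed.

Lemma iter_sigma_neq0 i x : x != 0 -> iter i sigma x != 0.
Proof. by move=> hx; elim: i => //= i IH; apply: sigma_neq0. Qed.

Lemma coef_mulT q j : (mT q)`_j = (if j is j'.+1 then sigma q`_j' else 0) + delta q`_j.
Proof.
rewrite /mulT coefD coefMX coef_map_id0 ?rmorph0 // coef_map_id0 ?delta0 //.
by case: j => [|j] //=; rewrite coef_map_id0 ?rmorph0.
Qed.

Lemma mulTD p q : mT (p + q) = mT p + mT q.
Proof.
apply/polyP => j; rewrite !(coef_mulT, coefD) delta_add.
case: j => [|j] /=; [by rewrite !add0r | by rewrite coefD rmorphD addrACA].
Qed.

Lemma mulT0 : mT 0 = 0.
Proof.
have h := mulTD 0 0; rewrite addr0 in h.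
by apply: (@addrI _ (mT 0)); rewrite addr0 -h.
Qed.

Lemma mulTN p : mT (- p) = - mT p.
Proof.
have h := mulTD p (- p); rewrite subrr mulT0 in h.
by apply: (@addrI _ (mT p)); rewrite -h subrr.
Qed.

Lemma mulTB p q : mT (p - q) = mT p - mT q.
Proof. by rewrite mulTD mulTN. Qed.

Lemma mulTZ k q : mT (k *: q) = sigma k *: mT q + delta k *: q.
Proof.
apply/polyP => j; rewrite !(coef_mulT, coefD, coefZ) delta_mul.
case: j => [|j] /=; rewrite ?rmorphM ?mulr0 ?add0r //.
by rewrite coefZ rmorphM mulrDr addrA.
Qed.

Lemma sigma_b (b : bool) : sigma b%:R = b%:R.
Proof. by case: b; rewrite ?rmorph1 ?rmorph0. Qed.
Lemma delta_b (b : bool) : delta b%:R = 0.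
Proof. by case: b; rewrite ?delta1 ?delta0. Qed.

Lemma mulT_Xn (i : nat) : mT ('X^i : {poly K}) = 'X^(i.+1).
Proof.
apply/polyP => j; rewrite coef_mulT !coefXn delta_b addr0.
by case: j => [|j] //=; rewrite coefXn sigma_b eqSS.
Qed.

Lemma iterTD i p q : iterT i (p + q) = iterT i p + iterT i q.
Proof. by elim: i => //= i ->; rewrite mulTD. Qed.
Lemma iterT0 i : iterT i 0 = 0.
Proof. by elim: i => //= i ->; rewrite mulT0. Qed.
Lemma iterTN i p : iterT i (- p) = - iterT i p.
Proof. by elim: i => //= i ->; rewrite mulTN. Qed.
Lemma iterTB i p q : iterT i (p - q) = iterT i p - iterT i q.
Proof. by rewrite iterTD iterTN. Qed.

Lemma size_mulT q : q != 0 -> size (mT q) = (size q).+1 /\ lead_coef (mT q) = sigma (lead_coef q).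
Proof.
move=> hq.
have hs : (0 < size q)%N by rewrite size_poly_gt0.
have top : (mT q)`_(size q) = sigma (lead_coef q).
  rewrite coef_mulT lead_coefE (nth_default _ (leqnn (size q))) delta0 addr0.
  by case: (size q) hs => [|n].
have hz : forall j, (size q < j)%N -> (mT q)`_j = 0.
  move=> [|j] //= hj; rewrite coef_mulT !nth_default ?rmorph0 ?delta0 ?addr0 //.
  by apply: ltnW.
have hsz : size (mT q) = (size q).+1.
  apply/eqP; rewrite eqn_leq; apply/andP; split.
    by apply/leq_sizeP => j hj; apply: hz.
  rewrite ltnNge; apply/negP => /leq_sizeP /(_ (size q) (leqnn _)).
  by rewrite top => /eqP; apply/negP; apply: sigma_neq0; rewrite lead_coef_eq0.
by split => //; rewrite lead_coefE hsz /=.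
Qed.

Lemma size_iterT i q : q != 0 ->
  size (iterT i q) = (size q + i)%N /\ lead_coef (iterT i q) = iter i sigma (lead_coef q).
Proof.
move=> hq; elim: i => [|i [IH1 IH2]] /=; first by rewrite addn0.
have hq' : iterT i q != 0.
  by rewrite -size_poly_gt0 IH1 addn_gt0 size_poly_gt0 hq.
by have [-> ->] := size_mulT hq'; rewrite IH1 IH2 addnS.
Qed.

Lemma smulE n (P Q : {poly K}) : (size P <= n)%N -> sm P Q = \sum_(i < n) P`_i *: iterT i Q.
Proof.
move=> hn; rewrite /smul (big_ord_widen _ (fun i => P`_i *: iterT i Q) hn).
rewrite big_mkcond /=; apply: eq_bigr => i _.
by case: ifP => // /negbT; rewrite -leqNgt => h; rewrite nth_default // scale0r.
Qed.

Lemma smulDl (P P' Q : {poly K}) : sm (P + P') Q = sm P Q + sm P' Q.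
Proof.
set n := maxn (size P) (size P').
rewrite (@smulE n) ?size_polyD // (@smulE n P) ?leq_maxl // (@smulE n P') ?leq_maxr //.
by rewrite -big_split /=; apply: eq_bigr => i _; rewrite coefD scalerDl.
Qed.

Lemma smul0l Q : sm 0 Q = 0.
Proof. by rewrite /smul size_poly0 big_ord0. Qed.

Lemma smulZl k P Q : sm (k *: P) Q = k *: sm P Q.
Proof.
rewrite (@smulE (size P)) ?size_scale_leq // /smul scaler_sumr.
by apply: eq_bigr => i _; rewrite coefZ scalerA.
Qed.

Lemma smulNl P Q : sm (- P) Q = - sm P Q.
Proof. by rewrite -scaleN1r smulZl scaleN1r. Qed.

Lemma smulBl P P' Q : sm (P - P') Q = sm P Q - sm P' Q.
Proof. by rewrite smulDl smulNl. Qed.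

Lemma smulDr P Q Q' : sm P (Q + Q') = sm P Q + sm P Q'.
Proof. by rewrite /smul -big_split /=; apply: eq_bigr => i _; rewrite iterTD scalerDr. Qed.

Lemma smul0r P : sm P 0 = 0.
Proof. by rewrite /smul big1 // => i _; rewrite iterT0 scaler0. Qed.

Lemma smulNr P Q : sm P (- Q) = - sm P Q.
Proof. by rewrite /smul -sumrN; apply: eq_bigr => i _; rewrite iterTN scalerN. Qed.

Lemma smulBr P Q Q' : sm P (Q - Q') = sm P Q - sm P Q'.
Proof. by rewrite smulDr smulNr. Qed.

Lemma smulC k Q : sm k%:P Q = k *: Q.
Proof. by rewrite (@smulE 1) ?size_polyC ?leq_b1 // big_ord1 coefC. Qed.

Lemma smul1l Q : sm 1 Q = Q.
Proof. by rewrite -polyC1 smulC scale1r. Qed.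

Lemma smulXn i Q : sm 'X^i Q = iterT i Q.
Proof.
rewrite (@smulE i.+1) ?size_polyXn // big_ord_recr /= coefXn eqxx scale1r big1 ?add0r //.
by move=> j _; rewrite coefXn (ltn_eqF (ltn_ord j)) scale0r.
Qed.

Lemma smulX Q : sm 'X Q = mT Q.
Proof. by rewrite -(expr1 'X) smulXn. Qed.

Lemma smul_suml (I : Type) (r : seq I) (F : I -> {poly K}) Q :
  sm (\sum_(i <- r) F i) Q = \sum_(i <- r) sm (F i) Q.
Proof. by apply: (big_morph (fun P => sm P Q)) => [x y|]; rewrite ?smulDl ?smul0l. Qed.

Lemma mulT_sum (I : Type) (r : seq I) (F : I -> {poly K}) :
  mT (\sum_(i <- r) F i) = \sum_(i <- r) mT (F i).
Proof. by apply: (big_morph mT) => [x y|]; rewrite ?mulTD ?mulT0. Qed.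

Lemma size_mulT_leq q : (size (mT q) <= (size q).+1)%N.
Proof.
apply/leq_sizeP => j hj; rewrite coef_mulT.
case: j hj => [|j] //= hj; rewrite !nth_default ?rmorph0 ?delta0 ?addr0 //.
by apply: ltnW.
Qed.

Lemma smul_mulT P Q : sm (mT P) Q = mT (sm P Q).
Proof.
set n := size P.
rewrite (@smulE n.+1) ?size_mulT_leq // /smul -/n mulT_sum.
under eq_bigr do rewrite coef_mulT scalerDl.
rewrite big_split /= big_ord_recl /= scale0r add0r big_ord_recr /= nth_default // delta0 scale0r addr0.
rewrite -big_split /=; apply: eq_bigr => i _.
by rewrite mulTZ addrC.
Qed.

Lemma smul_iterT i P Q : sm (iterT i P) Q = iterT i (sm P Q).
Proof. by elim: i => //= i <-; rewrite smul_mulT. Qed.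

Lemma smulA P Q U : sm (sm P Q) U = sm P (sm Q U).
Proof.
rewrite [sm P Q]/smul smul_suml [sm P _]/smul.
by apply: eq_bigr => i _; rewrite smulZl smul_iterT.
Qed.

Lemma iterT1 i : iterT i 1 = 'X^i.
Proof. by elim: i => [|i IH] /=; rewrite ?expr0 // IH mulT_Xn. Qed.

Lemma smul1r P : sm P 1 = P.
Proof.
rewrite /smul; under eq_bigr do rewrite iterT1.
by rewrite -poly_def coefK.
Qed.

Lemma smulCr k P : sm P k%:P = \sum_(i < size P) P`_i *: iterT i k%:P.
Proof. by []. Qed.


Lemma size_eq_coef p n : (size p <= n.+1)%N -> p`_n != 0 -> size p = n.+1.
Proof.
move=> h1 h2; apply/eqP; rewrite eqn_leq h1 /=; rewrite ltnNge; apply/negP => h.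
by move/eqP: h2; apply; rewrite nth_default.
Qed.

Lemma size_scaleK k p : k != 0 -> p != 0 ->
  size (k *: p) = size p /\ lead_coef (k *: p) = k * lead_coef p.
Proof.
move=> hk hp.
have hs : size p = (size p).-1.+1 by rewrite prednK // size_poly_gt0.
have h : size (k *: p) = size p.
  rewrite hs; apply: size_eq_coef; first by rewrite -hs size_scale_leq.
  by rewrite coefZ mulf_neq0K // -lead_coefE lead_coef_eq0.
by split => //; rewrite !lead_coefE h coefZ.
Qed.

Lemma size_smul P Q : P != 0 -> Q != 0 ->
  size (sm P Q) = (size P + size Q).-1 /\
  lead_coef (sm P Q) = lead_coef P * iter (size P).-1 sigma (lead_coef Q).
Proof.
move=> hP hQ.
have hs : size P = (size P).-1.+1 by rewrite prednK // size_poly_gt0.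
set m := (size P).-1 in hs *.
have hPm : P`_m != 0 by rewrite /m -lead_coefE lead_coef_eq0.
have [hB1 hB2] := size_iterT m hQ.
have hBnz : iterT m Q != 0 by rewrite -size_poly_gt0 hB1 addn_gt0 size_poly_gt0 hQ.
have [hC1 hC2] := size_scaleK hPm hBnz.
have hQs : (0 < size Q)%N by rewrite size_poly_gt0.
have hsum : (size (\sum_(i < m) P`_i *: iterT i Q)%R < size (P`_m *: iterT m Q))%N.
  rewrite hC1 hB1.
  apply: (@leq_ltn_trans (size Q + m).-1); last by rewrite prednK // addn_gt0 hQs.
  apply: (big_ind (fun p => (size p <= (size Q + m).-1)%N)).
  - by rewrite size_poly0.
  - by move=> x y hx hy; apply: leq_trans (size_polyD _ _) _; rewrite geq_max hx hy.
  move=> i _; apply: (leq_trans (size_scale_leq P`_i (iterT i Q))).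
  case: (eqVneq Q 0) => [->|hQ']; first by rewrite iterT0 size_poly0.
  have [-> _] := size_iterT i hQ'.
  by rewrite -ltnS prednK ?addn_gt0 ?hQs // ltn_add2l ltn_ord.
rewrite (@smulE m.+1 P Q); last by rewrite -hs.
rewrite big_ord_recr /= addrC.
rewrite (size_polyDl hsum) (lead_coefDl hsum) hC1 hC2 hB1 hB2.
by split => //; rewrite hs addSn addnC.
Qed.

Lemma smul_neq0 P Q : P != 0 -> Q != 0 -> sm P Q != 0.
Proof.
move=> hP hQ; have [h _] := size_smul hP hQ.
by rewrite -size_poly_gt0 h -subn1 subn_gt0 -addn1 leq_add // size_poly_gt0.
Qed.

Lemma smul_eq0 P Q : sm P Q = 0 -> P = 0 \/ Q = 0.
Proof.
move=> h; case: (eqVneq P 0) => hP; [by left | case: (eqVneq Q 0) => hQ; [by right|]].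
by move: (smul_neq0 hP hQ); rewrite h eqxx.
Qed.

Lemma smulI u P Q : u != 0 -> sm u P = sm u Q -> P = Q.
Proof.
move=> hu h; apply/eqP; rewrite -subr_eq0; apply/eqP.
have : sm u (P - Q) = 0 by rewrite smulBr h subrr.
by case/smul_eq0 => // h'; move: hu; rewrite h' eqxx.
Qed.

Lemma smulIr u P Q : u != 0 -> sm P u = sm Q u -> P = Q.
Proof.
move=> hu h; apply/eqP; rewrite -subr_eq0; apply/eqP.
have : sm (P - Q) u = 0 by rewrite smulBl h subrr.
by case/smul_eq0 => // h'; move: hu; rewrite h' eqxx.
Qed.

Lemma size_smul_ger P Q : P != 0 -> Q != 0 -> (size Q <= size (sm P Q))%N.
Proof.
move=> hP hQ; have [-> _] := size_smul hP hQ.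
have : (0 < size P)%N by rewrite size_poly_gt0.
by case: (size P) => // n _; rewrite addSn /= leq_addl.
Qed.

Lemma size_smul_gel P Q : P != 0 -> Q != 0 -> (size P <= size (sm P Q))%N.
Proof.
move=> hP hQ; have [-> _] := size_smul hP hQ.
have : (0 < size Q)%N by rewrite size_poly_gt0.
by case: (size Q) => // n _; rewrite addnS /= leq_addr.
Qed.

Lemma size_sub_lead p q : p != 0 -> size p = size q -> lead_coef p = lead_coef q ->
  (size (p - q)%R < size p)%N.
Proof.
move=> hp hs hl.
have hs' : size p = (size p).-1.+1 by rewrite prednK // size_poly_gt0.
rewrite [X in (_ < X)%N]hs' ltnS; apply/leq_sizeP => j hj.
rewrite coefB; case: (ltngtP j (size p).-1) => hj'.
- by move: hj; rewrite leqNgt hj'.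
- by rewrite !nth_default ?subrr // -?hs // hs'.
- by move: hl; rewrite !lead_coefE -hs hj' => ->; rewrite subrr.
Qed.

Lemma sdivP P B : B != 0 -> exists q r, P = sm q B + r /\ (size r < size B)%N.
Proof.
move=> hB.
elim: (size P) {-2}P (leqnn (size P)) => [|n IH] {}P hP.
  exists 0, P; rewrite smul0l add0r; split => //.
  by apply: leq_ltn_trans hP _; rewrite size_poly_gt0.
case: (ltnP (size P) (size B)) => hPB.
  by exists 0, P; rewrite smul0l add0r.
have hP0 : P != 0 by rewrite -size_poly_gt0; apply: leq_trans hPB; rewrite size_poly_gt0.
set d := (size P - size B)%N.
have hlB : iter d sigma (lead_coef B) != 0 by apply: iter_sigma_neq0; rewrite lead_coef_eq0.
set c := lead_coef P * (iter d sigma (lead_coef B))^-1.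
have hc : c != 0 by rewrite mulf_neq0K ?invr_neq0K // lead_coef_eq0.
have [hI1 hI2] := size_iterT d hB.
have hInz : iterT d B != 0 by rewrite -size_poly_gt0 hI1 addn_gt0 size_poly_gt0 hB.
have [hS1 hS2] := size_scaleK hc hInz.
have hM : sm (c *: 'X^d) B = c *: iterT d B by rewrite smulZl smulXn.
have hlt : (size (P - sm (c *: 'X^d) B)%R < size P)%N.
  apply: size_sub_lead => //; rewrite hM.
    by rewrite hS1 hI1 /d addnC subnK.
  by rewrite hS2 hI2 /c divrK // unitK.
have [q [r [h1 h2]]] := IH _ (leq_trans (leq_trans hlt hP) (leqnn _)).
  exists (q + c *: 'X^d), r; split => //.
by rewrite smulDl -addrAC -h1 subrK.
Qed.


Local Notation ev := (seval sigma delta).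
Local Notation act := (sdact sigma delta).

Lemma XsubC_neq0 c : ('X - c%:P : {poly K}) != 0.
Proof. by rewrite -size_poly_gt0 size_XsubC. Qed.

Lemma sevalP P c : exists Q, P - (ev P c)%:P = sm Q ('X - c%:P).
Proof.
rewrite /seval; apply: (epsilon_spec (inhabits 0) (fun c0 : K => exists Q : {poly K}, P - c0%:P = sm Q ('X - c%:P))).
have [q [r [h1 h2]]] := sdivP P (XsubC_neq0 c).
rewrite size_XsubC in h2.
have hr := size1_polyC h2.
by exists r`_0, q; rewrite {1}h1 {1}hr addrK.
Qed.

Lemma subsub (x y z : {poly K}) : (x - y) - (x - z) = z - y.
Proof. by rewrite opprB addrC addrA subrK. Qed.

Lemma seval_uniq P c k Q : P - k%:P = sm Q ('X - c%:P) -> ev P c = k.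
Proof.
move=> h; have [Q' hQ'] := sevalP P c.
have e : (k - ev P c)%:P = sm (Q' - Q) ('X - c%:P).
  by rewrite smulBl -hQ' -h polyCB subsub.
case: (eqVneq (Q' - Q) 0) => hQ.
  by move: e; rewrite hQ smul0l => /eqP; rewrite polyC_eq0 subr_eq0 => /eqP.
have := size_smul_ger hQ (XsubC_neq0 c); rewrite -e size_XsubC.
have := size_polyC (k - ev P c); case: (_ != _) => /= -> //.
Qed.

Lemma ev_factor Q c : ev (sm Q ('X - c%:P)) c = 0.
Proof. by apply: (seval_uniq (Q := Q)); rewrite subr0. Qed.

Lemma evC k c : ev k%:P c = k.
Proof. by apply: (seval_uniq (Q := 0)); rewrite subrr smul0l. Qed.

Lemma ev0 c : ev 0 c = 0.
Proof. by rewrite -polyC0 evC. Qed.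

Lemma evD P Q c : ev (P + Q) c = ev P c + ev Q c.
Proof.
have [Q1 h1] := sevalP P c; have [Q2 h2] := sevalP Q c.
apply: (seval_uniq (Q := Q1 + Q2)).
by rewrite smulDl -h1 -h2 polyCD opprD addrACA.
Qed.

Lemma evZ k P c : ev (k *: P) c = k * ev P c.
Proof.
have [Q1 h1] := sevalP P c.
apply: (seval_uniq (Q := k *: Q1)).
by rewrite smulZl -h1 scalerBr polyCM mul_polyC.
Qed.

Lemma evN P c : ev (- P) c = - ev P c.
Proof. by rewrite -scaleN1r evZ mulN1r. Qed.

Lemma evB P Q c : ev (P - Q) c = ev P c - ev Q c.
Proof. by rewrite evD evN. Qed.

Lemma ev_root P c : ev P c = 0 -> exists Q, P = sm Q ('X - c%:P).
Proof. by move=> h; have [Q hQ] := sevalP P c; exists Q; rewrite -hQ h subr0. Qed.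

Lemma ev_XsubC d c : ev ('X - d%:P) c = c - d.
Proof.
apply: (seval_uniq (Q := 1)); rewrite smul1l polyCB opprB addrA subrK.
by [].
Qed.

Lemma act1 c : act 1 c = c.
Proof. by rewrite /sdact rmorph1 mul1r invr1 mulr1 delta1 mul0r addr0. Qed.

Lemma actM b k c : b != 0 -> k != 0 -> act b (act k c) = act (b * k) c.
Proof.
move=> hb hk; rewrite /sdact rmorphM delta_mul invrM ?unitK //.
rewrite !mulrDl !mulrDr !mulrA (mulrK (unitK hk)).
by rewrite mulrDl addrA.
Qed.

Lemma act_inv k c : k != 0 -> act k^-1 (act k c) = c.
Proof. by move=> hk; rewrite actM ?invr_neq0K // mulVr ?unitK // act1. Qed.

Lemma map_delta_C k : map_poly delta k%:P = (delta k)%:P.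
Proof.
by apply/polyP => i; rewrite coef_map_id0 ?delta0 // !coefC; case: (i == 0)%N; rewrite ?delta0.
Qed.

Lemma smul_XsubC_C k c : k != 0 -> sm ('X - (act k c)%:P) k%:P = sigma k *: ('X - c%:P).
Proof.
move=> hk.
rewrite smulBl smulX smulC /mulT map_polyC map_delta_C /=.
have e : act k c * k = sigma k * c + delta k.
  by rewrite /sdact mulrDl !divrK ?unitK.
rewrite -mul_polyC -polyCM e polyCD scalerBr -!mul_polyC -polyCM.
by rewrite (addrC (sigma k * c)%:P) opprD addrA addrK.
Qed.

Lemma ev_mulC P k c : k != 0 -> ev (sm P k%:P) c = ev P (act k c) * k.
Proof.
move=> hk; have [Q hQ] := sevalP P (act k c).
have hP : P = sm Q ('X - (act k c)%:P) + (ev P (act k c))%:P by rewrite -hQ subrK.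
apply: (seval_uniq (Q := sm Q (sigma k)%:P)).
rewrite {1}hP smulDl smulA smul_XsubC_C // smulC polyCM mul_polyC addrK.
by rewrite smulA smulC.
Qed.

Lemma ev_mul P Q c : ev (sm P Q) c = skew_prod sigma delta (ev P) (ev Q) c.
Proof.
rewrite /skew_prod; have [Q1 hQ1] := sevalP Q c.
have hQ : Q = sm Q1 ('X - c%:P) + (ev Q c)%:P by rewrite -hQ1 subrK.
rewrite {1}hQ smulDr -smulA evD ev_factor add0r.
case: (eqVneq (ev Q c) 0) => h /=.
  by rewrite h smul0r ev0.
by rewrite ev_mulC.
Qed.

Lemma ev_mul0 P Q c : ev Q c = 0 -> ev (sm P Q) c = 0.
Proof. by move=> h; rewrite ev_mul /skew_prod h eqxx. Qed.

Lemma ev_mul_neq0 P Q c : ev (sm P Q) c != 0 -> ev Q c != 0 /\ ev P (act (ev Q c) c) != 0.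
Proof.
rewrite ev_mul /skew_prod; case: (eqVneq (ev Q c) 0) => h //=; first by rewrite eqxx.
move=> h2; split => //; apply/eqP => h3; move: h2; by rewrite h3 mul0r eqxx.
Qed.


Lemma mul_eq0_r (x y : K) : y != 0 -> x * y = 0 -> x = 0.
Proof. by move=> hy h; rewrite -(mulrK (unitK hy) x) h mul0r. Qed.

Lemma mul_eq0_l (x y : K) : x != 0 -> x * y = 0 -> y = 0.
Proof. by move=> hx h; rewrite -(mulKr (unitK hx) y) h mulr0. Qed.

Variable a : K.
Local Notation inD := (inDelta sigma delta a).

Definition S0 P := P != 0 /\ forall c, inD c -> ev P c != 0.
Definition vanish P := forall c, inD c -> ev P c = 0.
Definition rdvd P B := exists q, P = sm q B.

Lemma inD_a : inD a.
Proof. by exists 1; rewrite oner_neq0 act1. Qed.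

Lemma inD_act c k : inD c -> k != 0 -> inD (act k c).
Proof. by move=> [b [hb ->]] hk; exists (k * b); rewrite mulf_neq0K // actM. Qed.

Lemma inD_back c k : k != 0 -> inD (act k c) -> inD c.
Proof. by move=> hk h; rewrite -(act_inv c hk); apply: inD_act => //; apply: invr_neq0K. Qed.

Inductive isW : {poly K} -> Prop :=
| isW1 : isW 1
| isWX W e : isW W -> inD e -> isW (sm ('X - e%:P) W).

Lemma isW_neq0 W : isW W -> W != 0.
Proof.
elim => [|W' e _ IH _]; first by rewrite oner_neq0.
exact: smul_neq0 (XsubC_neq0 e) IH.
Qed.

Lemma isW_roots W c : isW W -> ev W c = 0 -> inD c.
Proof.
elim => [|W' e hW IH he].
  by rewrite -polyC1 evC => /eqP; rewrite oner_eq0.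
rewrite ev_mul /skew_prod; case: (eqVneq (ev W' c) 0) => h /=; first by move=> _; apply: IH.
move/(mul_eq0_r h); rewrite ev_XsubC => /eqP; rewrite subr_eq0 => /eqP he'.
by apply: (inD_back h); rewrite he'.
Qed.

Lemma size_XsubC_mul e W : W != 0 -> size (sm ('X - e%:P) W) = (size W).+1.
Proof. by move=> hW; have [-> _] := size_smul (XsubC_neq0 e) hW; rewrite size_XsubC. Qed.

Lemma rdvd_vanish W p : (forall c, inD c -> ev W c = 0) -> vanish p -> True.
Proof. by []. Qed.

Lemma stepW W c : isW W -> (forall p, vanish p -> rdvd p W) -> inD c -> ev W c != 0 ->
  let W' := sm ('X - (act (ev W c) c)%:P) W in
  isW W' /\ (forall p, vanish p -> rdvd p W') /\ size W' = (size W).+1.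
Proof.
move=> hW hdiv hc hWc W'.
have he : inD (act (ev W c) c) by apply: inD_act.
split; first by constructor.
split; last by rewrite size_XsubC_mul ?isW_neq0.
move=> p hp; have [q hq] := hdiv p hp.
have : ev q (act (ev W c) c) = 0.
  by have := hp c hc; rewrite hq ev_mul /skew_prod hWc /=; apply: mul_eq0_r.
by move/ev_root => [q' hq']; exists q'; rewrite hq hq' smulA.
Qed.

Lemma existsW : sd_algebraic sigma delta a ->
  exists f, isW f /\ vanish f /\ forall p, vanish p -> rdvd p f.
Proof.
move=> [P0 [hP0 hv0]].
suff : forall n W, isW W -> (forall p, vanish p -> rdvd p W) -> (size P0 - size W <= n)%N ->
    exists f, isW f /\ vanish f /\ forall p, vanish p -> rdvd p f.
  move/(_ (size P0) 1); apply => //; first by constructor.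
    by move=> p _; exists p; rewrite smul1r.
  by rewrite leq_subr.
elim => [|n IH] W hW hdiv hsz;
  (case: (classic (vanish W)) => hvW; first by exists W);
  (have [c [hc hWc]] : exists c, inD c /\ ev W c != 0 by
      apply: NNPP => hn; apply: hvW => c hc; apply: NNPP => h; apply: hn; exists c; split => //; apply/eqP);
  have [hW' [hdiv' hs']] := stepW hW hdiv hc hWc;
  set W' := sm _ W in hW' hdiv' hs';
  have [q hq] := hdiv' P0 hv0;
  (have hq0 : q != 0 by apply/eqP => h; move: hP0; rewrite hq h smul0l eqxx);
  have hle := size_smul_ger hq0 (isW_neq0 hW');
  rewrite -hq hs' in hle.
- exfalso; move: hsz hle; lia.
- by apply: (IH _ hW' hdiv'); rewrite hs'; lia.
Qed.

Definition Fgood f := isW f /\ vanish f /\ forall p, vanish p -> rdvd p f.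

Lemma Fgood_two f r : Fgood f -> rdvd (sm f r) f.
Proof.
move=> [hW [hv hd]]; apply: hd => c hc.
rewrite ev_mul /skew_prod; case: (eqVneq (ev r c) 0) => h //=.
by rewrite hv ?mul0r //; apply: inD_act.
Qed.

Lemma gcrdP g h : g != 0 -> exists d x y, d = sm x g + sm y h /\ d != 0 /\ rdvd g d /\ rdvd h d.
Proof.
elim: (size h) {-2}h (leqnn (size h)) g => [|n IH] {}h hh g hg.
  have -> : h = 0 by apply/eqP; rewrite -size_poly_eq0; move: hh; case: (size h).
  exists g, 1, 0; rewrite smul1l smul0l addr0; split => //; split => //; split.
    by exists 1; rewrite smul1l.
  by exists 0; rewrite smul0l.
case: (eqVneq h 0) => h0.
  exists g, 1, 0; rewrite smul1l smul0l addr0; split => //; split => //; split.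
    by exists 1; rewrite smul1l.
  by exists 0; rewrite h0 smul0l.
have [q [r [e1 e2]]] := sdivP g h0.
have [d [x [y [hd [hd0 [[q1 hq1] [q2 hq2]]]]]]] := IH r (leq_trans e2 hh) h h0.
exists d, y, (x - sm y q); split; last split => //; last split.
- by rewrite hd e1 smulDr smulBl -smulA [RHS]addrC addrA subrK.
- by exists (sm q q1 + q2); rewrite smulDl smulA -hq1 -hq2.
- by exists q1.
Qed.


Lemma size1_const (d : {poly K}) : (size d <= 1)%N -> d != 0 -> d = (d`_0)%:P /\ d`_0 != 0.
Proof.
move=> hs hd; have e := size1_polyC hs; split => //.
by apply/eqP => h; move: hd; rewrite e h polyC0 eqxx.
Qed.

Lemma scaleC_inv k : k != 0 -> k^-1 *: (k%:P : {poly K}) = 1.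
Proof. by move=> hk; rewrite -mul_polyC -polyCM mulVr ?unitK. Qed.

Lemma smul_Cinv r k : k != 0 -> sm (sm r (k^-1)%:P) k%:P = r.
Proof. by move=> hk; rewrite smulA smulC scaleC_inv // smul1r. Qed.

Lemma ev_X c : ev 'X c = c.
Proof. by have := ev_XsubC 0 c; rewrite polyC0 subr0 subr0. Qed.

Lemma size2_root g : size g = 2 -> exists c, ev g c = 0.
Proof.
move=> hs.
have hg1 : g`_1 != 0.
  have : lead_coef g != 0 by rewrite lead_coef_eq0 -size_poly_gt0 hs.
  by rewrite lead_coefE hs.
have eg : g = (g`_0)%:P + g`_1 *: 'X.
  apply/polyP => j; rewrite coefD coefC coefZ coefX.
  case: j => [|[|j]] /=; rewrite ?mulr0 ?addr0 ?mulr1 ?add0r //.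
  by rewrite nth_default // hs.
exists (- ((g`_1)^-1 * g`_0)).
by rewrite {1}eg evD evC evZ ev_X mulrN mulVKr ?unitK // subrr.
Qed.

Lemma RD W : isW W -> forall g, (1 < size g)%N -> rdvd W g -> exists c, inD c /\ ev g c = 0.
Proof.
elim => [|W' e hW' IH he] g hg [m hm].
  have hm0 : m != 0 by apply/eqP => h; move: hm; rewrite h smul0l => /eqP; rewrite oner_eq0.
  have g0 : g != 0 by rewrite -size_poly_gt0; apply: ltnW.
  have := size_smul_ger hm0 g0; rewrite -hm size_poly1 => h.
  by move: hg; rewrite ltnNge h.
have g0 : g != 0 by rewrite -size_poly_gt0; apply: ltnW.
have [d [x [y [hd [hd0 [[q1 hq1] [q2 hq2]]]]]]] := gcrdP W' g0.
case: (ltnP 1 (size d)) => hsd.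
  have [c [hc hdc]] := IH d hsd (ex_intro _ q2 hq2).
  by exists c; split => //; rewrite hq1; apply: ev_mul0.
have [ed hk] := size1_const hsd hd0; set k := d`_0 in ed hk.
have key : forall r, exists k0 M, r - k0 *: W' = sm M g.
  move=> r; set r' := sm r (k^-1)%:P.
  have e1 : r = sm (sm r' x) g + sm (sm r' y) W'.
    by rewrite [sm (sm r' x) g]smulA [sm (sm r' y) W']smulA -smulDr -hd ed /r' smul_Cinv.
  set z := sm r' y in e1 *.
  have [z1 hz1] := sevalP z e.
  have ez : z = sm z1 ('X - e%:P) + (ev z e)%:P by rewrite -hz1 subrK.
  exists (ev z e), (sm r' x + sm z1 m).
  rewrite {1}e1 {1}ez smulDl [sm (sm z1 _) W']smulA hm -smulA smulC smulDl.
  by rewrite addrA addrK.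
have [e0|hg2] := ltnP 2 (size g).
  exfalso.
  have [k1 [M1 h1]] := key 1; have [k2 [M2 h2]] := key 'X.
  case: (eqVneq k1 0) => hk1.
    move: h1; rewrite hk1 scale0r subr0 => h1.
    have hM1 : M1 != 0 by apply/eqP => h; move: h1; rewrite h smul0l => /eqP; rewrite oner_eq0.
    by have := size_smul_ger hM1 g0; rewrite -h1 size_poly1 leqNgt ltnW.
  have e3 : (k2 / k1)%:P - 'X = sm ((k2 / k1) *: M1 - M2) g.
    rewrite smulBl smulZl -h1 -h2 scalerBr scalerA divrK ?unitK // -alg_polyC.
    by rewrite opprB addrA subrK.
  have hs3 : size ((k2 / k1)%:P - 'X) = 2 by rewrite -opprB size_polyN size_XsubC.
  case: (eqVneq ((k2 / k1) *: M1 - M2) 0) => hM.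
    by move: hs3; rewrite e3 hM smul0l size_poly0.
  by have := size_smul_ger hM g0; rewrite -e3 hs3 leqNgt e0.
have hs2 : size g = 2 by apply/eqP; rewrite eqn_leq hg2 hg.
have [c hc] := size2_root hs2.
exists c; split => //.
apply: (isW_roots (isWX hW' he)).
by rewrite hm; apply: ev_mul0.
Qed.

Lemma K2 f s : Fgood f -> S0 s -> exists t y, sm t s + sm y f = 1.
Proof.
move=> [hW [hv hd]] [s0 hs].
have [d [x [y [ed [hd0 [[q1 hq1] [q2 hq2]]]]]]] := gcrdP f s0.
case: (ltnP 1 (size d)) => hsd.
  have [c [hc hdc]] := RD hW hsd (ex_intro _ q2 hq2).
  by move: (hs c hc); rewrite hq1 ev_mul0 ?eqxx.
have [ed' hk] := size1_const hsd hd0; set k := d`_0 in ed' hk.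
exists (k^-1 *: x), (k^-1 *: y).
by rewrite !smulZl -scalerDr -ed ed' scaleC_inv.
Qed.


Definition rdm P B : {poly K} * {poly K} :=
  epsilon (inhabits (0, 0)) (fun qr => P = sm qr.1 B + qr.2 /\ (size qr.2 < size B)%N).

Local Notation rmodB P B := (rdm P B).2.

Lemma rdmP P B : B != 0 -> P = sm (rdm P B).1 B + rmodB P B /\ (size (rmodB P B) < size B)%N.
Proof.
move=> hB; rewrite /rdm.
apply: (epsilon_spec (inhabits (0, 0)) (fun qr : {poly K} * {poly K} => P = sm qr.1 B + qr.2 /\ (size qr.2 < size B)%N)).
by have [q [r h]] := sdivP P hB; exists (q, r).
Qed.

Lemma rmod_uniq P B q r : B != 0 -> P = sm q B + r -> (size r < size B)%N -> rmodB P B = r.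
Proof.
move=> hB h1 h2; have [h3 h4] := rdmP P hB.
set q' := (rdm P B).1 in h3; set r' := rmodB P B in h3 h4 *.
have e0 : sm q B = sm q' B + r' - r by rewrite -h3 h1 addrK.
have e : sm (q - q') B = r' - r by rewrite smulBl e0 addrAC (addrC (sm q' B)) addrK.
case: (eqVneq (q - q') 0) => hq.
  by move: e; rewrite hq smul0l => /eqP; rewrite eq_sym subr_eq0 => /eqP.
have := size_smul_ger hq hB; rewrite e => h.
have h5 : (size (r' - r)%R < size B)%N.
  by apply: leq_ltn_trans (size_polyD _ _) _; rewrite size_polyN gtn_max h4 h2.
by move: (leq_ltn_trans h h5); rewrite ltnn.
Qed.

Lemma rmodD P Q B : B != 0 -> rmodB (P + Q) B = rmodB P B + rmodB Q B.
Proof.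
move=> hB; have [h1 h2] := rdmP P hB; have [h3 h4] := rdmP Q hB.
apply: (rmod_uniq (q := (rdm P B).1 + (rdm Q B).1)) => //.
  by rewrite {1}h1 {1}h3 smulDl addrACA.
by apply: leq_ltn_trans (size_polyD _ _) _; rewrite gtn_max h2 h4.
Qed.

Lemma rmodZ k P B : B != 0 -> rmodB (k *: P) B = k *: rmodB P B.
Proof.
move=> hB; have [h1 h2] := rdmP P hB.
apply: (rmod_uniq (q := k *: (rdm P B).1)) => //.
  by rewrite {1}h1 scalerDr smulZl.
by apply: leq_ltn_trans (size_scale_leq _ _) _.
Qed.

Lemma rmod0 B : B != 0 -> rmodB 0 B = 0.
Proof. move=> hB; apply: (rmod_uniq (q := 0)) => //; by rewrite ?smul0l ?addr0 ?size_poly0 ?size_poly_gt0. Qed.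

Lemma rmod_sum (I : Type) (r : seq I) (F : I -> {poly K}) B : B != 0 ->
  rmodB (\sum_(i <- r) F i) B = \sum_(i <- r) rmodB (F i) B.
Proof. by move=> hB; apply: (big_morph (fun P => rmodB P B)) => [x y|]; rewrite ?rmodD ?rmod0. Qed.

Lemma rmod_mulB q B : B != 0 -> rmodB (sm q B) B = 0.
Proof. by move=> hB; apply: (rmod_uniq (q := q)); rewrite ?addr0 ?size_poly0 ?size_poly_gt0. Qed.

Lemma rmod_small r B : B != 0 -> (size r < size B)%N -> rmodB r B = r.
Proof. by move=> hB h; apply: (rmod_uniq (q := 0)); rewrite ?smul0l ?add0r. Qed.

Lemma rmod_eq0 P B : B != 0 -> rmodB P B = 0 -> rdvd P B.
Proof. by move=> hB h; have [h1 _] := rdmP P hB; exists (rdm P B).1; rewrite {1}h1 h addr0. Qed.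

Lemma rmod_add_mul P q B : B != 0 -> rmodB (P + sm q B) B = rmodB P B.
Proof. by move=> hB; rewrite rmodD // rmod_mulB // addr0. Qed.

Lemma rmod_rdvd P B : B != 0 -> rdvd P B -> rmodB P B = 0.
Proof. by move=> hB [q ->]; apply: rmod_mulB. Qed.

Lemma gdl (J : seq nat) : forall (I : seq nat) (u w : nat -> {poly K}) (A : nat -> nat -> K),
  uniq I -> (size J < size I)%N ->
  (forall i, i \in I -> u i = \sum_(j <- J) A i j *: w j) ->
  exists kk : nat -> K, (exists i, i \in I /\ kk i != 0) /\ \sum_(i <- I) kk i *: u i = 0.
Proof.
elim: J => [|j0 J IH] I u w A hI hs hu.
  case: I hI hs hu => [|i0 I] // hI _ hu.
  exists (fun _ => 1); split; first by exists i0; rewrite mem_head oner_neq0.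
  rewrite big_seq big1 // => i hi; by rewrite hu // big_nil scaler0.
case: (classic (exists i0, i0 \in I /\ A i0 j0 != 0)) => [[i0 [hi0 hA]]|hn]; last first.
  apply: (IH I u w A) => //; first by apply: ltn_trans hs.
  move=> i hi; rewrite hu // big_cons.
  have -> : A i j0 = 0 by apply: NNPP => h; apply: hn; exists i; split => //; apply/eqP.
  by rewrite scale0r add0r.
set al := A i0 j0.
set I' := rem i0 I.
have hI' : uniq I' by apply: rem_uniq.
have hs' : (size J < size I')%N by rewrite /I' size_rem //; move: hs => /=; case: (size I) => //.
set u' := fun i => u i - (A i j0 * al^-1) *: u i0.
set A' := fun i j => A i j - A i j0 * al^-1 * A i0 j.
have hu' : forall i, i \in I' -> u' i = \sum_(j <- J) A' i j *: w j.
  move=> i hi; have hiI : i \in I by apply: (mem_rem hi).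
  rewrite /u' (hu i hiI) (hu i0 hi0) !big_cons scalerDr scalerA divrK ?unitK //.
  rewrite opprD addrACA subrr add0r scaler_sumr -sumrB.
  by apply: eq_bigr => j _; rewrite /A' scalerA scalerBl.
have [kk [[i1 [hi1 hk1]] hsum]] := IH I' u' w A' hI' hs' hu'.
exists (fun i => if i == i0 then - \sum_(i <- I') kk i * (A i j0 * al^-1) else kk i).
split.
  exists i1; rewrite (mem_rem hi1); split => //.
  have : i1 != i0 by move: hi1; rewrite mem_rem_uniq // => /andP [].
  by move/negbTE => ->.
rewrite (perm_big _ (perm_to_rem hi0)) big_cons eqxx /=.
have -> : \sum_(i <- rem i0 I) (if i == i0 then - \sum_(i2 <- I') kk i2 * (A i2 j0 * al^-1) else kk i) *: u i
        = \sum_(i <- I') kk i *: u i.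
  rewrite big_seq_cond [RHS]big_seq_cond; apply: eq_bigr => i /andP [hi _].
  have : i != i0 by move: hi; rewrite mem_rem_uniq // => /andP [].
  by move/negbTE => ->.
have e2 : \sum_(i <- I') kk i *: u' i = \sum_(i <- I') kk i *: u i - (\sum_(i <- I') kk i * (A i j0 * al^-1)) *: u i0.
  by rewrite scaler_suml -sumrB; apply: eq_bigr => i _; rewrite /u' scalerBr scalerA.
rewrite e2 in hsum; rewrite scaleNr addrC; exact: hsum.
Qed.

Local Notation Inat n := (index_iota 0 n).

Lemma poly_iota p n : (size p <= n)%N -> p = \sum_(i <- Inat n) p`_i *: 'X^i.
Proof.
move=> hp; rewrite big_mkord -poly_def; apply/polyP => j; rewrite coef_poly.
by case: ifP => // /negbT; rewrite -leqNgt => h; rewrite nth_default //; apply: leq_trans h.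
Qed.

Lemma coef_iota (kk : nat -> K) n j : (j < n)%N -> (\sum_(i <- Inat n) kk i *: 'X^i)`_j = kk j.
Proof. by move=> hj; rewrite big_mkord -poly_def coef_poly hj. Qed.


Lemma mem_Inat i n : (i \in Inat n) = (i < n)%N.
Proof. by rewrite mem_iota add0n subn0. Qed.

Lemma K3 f s t y : Fgood f -> sm t s + sm y f = 1 -> forall x, rdvd (sm x s) f -> rdvd x f.
Proof.
move=> hf e1 x [m hm].
have f0 : f != 0 by case: hf => hW _; apply: isW_neq0.
set n := (size f).-1.
have hsf : size f = n.+1 by rewrite /n prednK // size_poly_gt0.
have two : forall q, exists q', sm q (sm f s) = sm q' f.
  by move=> q; have [r' hr'] := Fgood_two s hf; exists (sm q r'); rewrite hr' smulA.
have [ex hx0s] := rdmP x f0.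
move: ex hx0s; set x0 := rmodB x f; set qx := (rdm x f).1 => ex hx0s.
have hx0 : rdvd (sm x0 s) f.
  have [q' hq'] := two qx.
  exists (m - q'); rewrite smulBl -hm -hq'.
  have -> : sm x s = sm qx (sm f s) + sm x0 s by rewrite {1}ex smulDl smulA.
  by rewrite addrC addKr.
suff hz : x0 = 0 by exists qx; rewrite ex hz addr0.
apply/eqP; apply: contraT => hx0nz.
set v := fun i => rmodB (sm 'X^i s) f.
have E : forall p, (size p <= n)%N -> rmodB (sm p s) f = \sum_(i <- Inat n) p`_i *: v i.
  move=> p hp; rewrite {1}(poly_iota hp) smul_suml rmod_sum //.
  by apply: eq_bigr => i _; rewrite smulZl rmodZ.
have hx0n : (size x0 <= n)%N by rewrite -ltnS -hsf.
have D : \sum_(i <- Inat n) x0`_i *: v i = 0 by rewrite -E // rmod_rdvd.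
have [i0 [hi0 hal]] : exists i0, i0 \in Inat n /\ x0`_i0 != 0.
  apply: NNPP => hn; move/negP: hx0nz; apply; apply/eqP.
  rewrite (poly_iota hx0n) big_seq big1 // => i hi.
  have -> : x0`_i = 0 by apply: NNPP => h; apply: hn; exists i; split => //; apply/eqP.
  by rewrite scale0r.
set al := x0`_i0.
set J := rem i0 (Inat n).
have split_sum : forall F : nat -> {poly K}, \sum_(i <- Inat n) F i = F i0 + \sum_(i <- J) F i.
  by move=> F; rewrite (perm_big _ (perm_to_rem hi0)) big_cons.
have Vi0 : v i0 = \sum_(i <- J) (- (al^-1 * x0`_i)) *: v i.
  have D' := D; rewrite split_sum in D'.
  have h : al *: v i0 = - \sum_(i <- J) x0`_i *: v i.
    by apply/eqP; rewrite -subr_eq0 opprK D'.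
  have -> : v i0 = al^-1 *: (al *: v i0) by rewrite scalerA mulVr ?unitK // scale1r.
  rewrite h scalerN scaler_sumr -sumrN; apply: eq_bigr => i _.
  by rewrite scalerA scaleNr.
set rho := fun j => rmodB (sm 'X^j t) f.
have Sp : forall j, j \in Inat n ->
    'X^j = \sum_(i <- J) ((rho j)`_i0 * (- (al^-1 * x0`_i)) + (rho j)`_i) *: v i.
  move=> j hj; have hjn : (j < n)%N by rewrite -mem_Inat.
  have [eq1 eq2] := rdmP (sm 'X^j t) f0.
  have hX : 'X^j = rmodB (sm (rho j) s) f.
    have hsX : (size ('X^j : {poly K}) < size f)%N by rewrite size_polyXn hsf.
    rewrite -{1}(rmod_small f0 hsX) -{1}(smul1r 'X^j) -e1 smulDr -!smulA rmod_add_mul //.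
    rewrite {1}eq1 smulDl smulA; have [q' ->] := two (rdm (sm 'X^j t) f).1.
    by rewrite addrC rmod_add_mul.
  rewrite hX E; last by rewrite -ltnS -hsf.
  rewrite split_sum Vi0 scaler_sumr -big_split; apply: eq_bigr => i _.
  by rewrite /= scalerA -scalerDl.
have hsJ : (size J < size (Inat n))%N.
  by rewrite /J size_rem //; move: hi0; case: (Inat n).
have [kk [[j1 [hj1 hk1]] hsum]] := gdl (u := fun j => 'X^j) (w := v)
   (A := fun j i => (rho j)`_i0 * (- (al^-1 * x0`_i)) + (rho j)`_i) (iota_uniq _ _) hsJ Sp.
move: hsum => /= /(congr1 (fun p : {poly K} => p`_j1)).
by rewrite coef_iota ?coef0 -?mem_Inat // => h; move: hk1; rewrite h eqxx.
Qed.

Lemma crux f s : Fgood f -> S0 s ->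
  exists t, (forall c, inD c -> ev (sm t s) c = 1) /\ (forall c, inD c -> ev (sm s t) c = 1).
Proof.
move=> hf hs; have [t [y e1]] := K2 hf hs.
have hv : vanish f by case: hf => _ [].
exists t; split.
  move=> c hc; have -> : sm t s = 1 - sm y f by rewrite -e1 addrK.
  by rewrite evB -polyC1 evC ev_mul0 ?subr0 //; apply: hv.
have : rdvd (sm (sm s t - 1) s) f.
  exists (- sm s y).
  have e' : sm t s = 1 - sm y f by rewrite -e1 addrK.
  by rewrite smulBl smul1l smulA e' smulBr smul1r -smulA smulNl addrAC subrr add0r.
move/(K3 hf e1) => [q hq] c hc.
have -> : sm s t = sm q f + 1 by rewrite -hq subrK.
by rewrite evD ev_mul0 ?hv // add0r -polyC1 evC.
Qed.

Lemma S0_surj f s : Fgood f -> S0 s -> forall d, inD d ->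
  exists c, inD c /\ ev s c != 0 /\ act (ev s c) c = d.
Proof.
move=> hf hs d hd; have [t [_ h2]] := crux hf hs.
have := h2 d hd; rewrite ev_mul /skew_prod.
case: (eqVneq (ev t d) 0) => ht /=; first by move/eqP; rewrite eq_sym oner_eq0.
move=> h; set c := act (ev t d) d.
have hsc : ev s c != 0 by apply/eqP => h0; move: h; rewrite -/c h0 mul0r => /eqP; rewrite eq_sym oner_eq0.
exists c; split; first by apply: inD_act.
split => //.
rewrite /c actM // -/c.
have -> : ev s c * ev t d = 1 by [].
by rewrite act1.
Qed.

Lemma S0_skinv f s : Fgood f -> S0 s -> skew_invertible sigma delta a (ev s).
Proof.
move=> hf hs; have [t [h1 h2]] := crux hf hs.
by exists (ev t) => z hz; rewrite -!ev_mul h1 ?h2.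
Qed.


Lemma arith1 (x y z : nat) : x.+1 = (y + z - 1)%N -> (0 < y)%N -> (x < z)%N -> (y <= 1)%N.
Proof. lia. Qed.

Lemma arith2 (x y : nat) : 2%N = (x + y - 1)%N -> (0 < x)%N -> (0 < y)%N -> x != 1%N -> y = 1%N.
Proof. move=> h1 h2 h3 /eqP h4; lia. Qed.

Lemma size_Inat n : size (Inat n) = n.
Proof. by rewrite size_iota subn0. Qed.

Lemma GO x y : y != 0 -> exists mu nu, mu != 0 /\ sm mu x = sm nu y.
Proof.
move=> y0; set d := (size y).-1.
have hsy : size y = d.+1 by rewrite /d prednK // size_poly_gt0.
set u := fun i => rmodB (sm 'X^i x) y.
have hu : forall i, i \in Inat d.+1 -> u i = \sum_(j <- Inat d) (u i)`_j *: 'X^j.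
  move=> i _; apply: poly_iota; rewrite -ltnS -hsy.
  by have [_ h] := rdmP (sm 'X^i x) y0.
have hs : (size (Inat d) < size (Inat d.+1))%N by rewrite !size_Inat.
have [kk [[i1 [hi1 hk1]] hsum]] := gdl (w := fun j => 'X^j) (iota_uniq _ _) hs hu.
exists (\sum_(i <- Inat d.+1) kk i *: 'X^i), (\sum_(i <- Inat d.+1) kk i *: (rdm (sm 'X^i x) y).1).
split.
  apply/eqP => h; move: hk1; have := congr1 (fun p : {poly K} => p`_i1) h.
  by rewrite /= coef_iota ?coef0 -?mem_Inat // => ->; rewrite eqxx.
rewrite smul_suml smul_suml.
have -> : \sum_(i <- Inat d.+1) sm (kk i *: 'X^i) x
       = \sum_(i <- Inat d.+1) sm (kk i *: (rdm (sm 'X^i x) y).1) y + \sum_(i <- Inat d.+1) kk i *: u i.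
  rewrite -big_split; apply: eq_bigr => i _.
  by rewrite /= !smulZl -scalerDr -(proj1 (rdmP (sm 'X^i x) y0)) smulXn.
by rewrite hsum addr0.
Qed.

Lemma min_size (Pr : {poly K} -> Prop) : (exists p, Pr p /\ p != 0) ->
  exists l, Pr l /\ l != 0 /\ forall p, Pr p -> p != 0 -> (size l <= size p)%N.
Proof.
move=> [p0 [h0 h0']].
suff : forall n p, (size p <= n)%N -> Pr p -> p != 0 ->
    exists l, Pr l /\ l != 0 /\ forall p, Pr p -> p != 0 -> (size l <= size p)%N.
  by move/(_ _ p0 (leqnn _) h0 h0').
elim => [|n IH] p hp hPp hp0.
  by move: hp0; rewrite -size_poly_gt0; move: hp; case: (size p).
case: (classic (forall p', Pr p' -> p' != 0 -> (size p <= size p')%N)) => h.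
  by exists p.
have [p' [hp' [hp'0 hlt]]] : exists p', Pr p' /\ p' != 0 /\ (size p' < size p)%N.
  apply: NNPP => hn; apply: h => p' h1 h2; rewrite leqNgt; apply/negP => h3.
  by apply: hn; exists p'.
by apply: (IH p') => //; rewrite -ltnS; apply: leq_trans hlt hp.
Qed.

Lemma CL f d r c : Fgood f -> S0 d -> inD c -> rdvd (sm ('X - c%:P) r) d -> rdvd r d.
Proof.
move=> hf [d0 hd] hc [q2 hq2].
have [q [r0 [er hr0]]] := sdivP r d0.
case: (eqVneq r0 0) => hr00; first by exists q; rewrite er hr00 addr0.
exfalso.
set m' : {poly K} := q2 - sm ('X - c%:P) q.
have he : sm ('X - c%:P) r0 = sm m' d.
  have -> : r0 = r - sm q d by rewrite er addrC addKr.
  by rewrite smulBr hq2 /m' smulBl smulA.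
have hm0 : m' != 0.
  by apply/eqP => h; move: (smul_neq0 (XsubC_neq0 c) hr00); rewrite he h smul0l eqxx.
have hsm : (size m' <= 1)%N.
  have [h1 _] := size_smul (XsubC_neq0 c) hr00.
  have [h2 _] := size_smul hm0 d0.
  move: h1 h2 hr0; rewrite he size_XsubC => -> h2.
  have := size_poly_gt0 m'; rewrite hm0 => /= hm.
  have := size_poly_gt0 d; rewrite d0 => /= hdd.
  have h2' : (size r0).+1 = (size m' + size d - 1)%N by rewrite subn1 -h2.
  by move=> hh; apply: (arith1 h2' hm hh).
have [em hk] := size1_const hsm hm0; set k := m'`_0 in em hk.
rewrite em smulC in he.
have key : forall e, inD e -> ev (sm ('X - c%:P) r0) e = 0 -> False.
  move=> e he0 h; move: h; rewrite he evZ => /(mul_eq0_l hk) => h.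
  by move/eqP: (hd e he0); apply.
case: (classic (exists e, inD e /\ ev r0 e = 0)) => [[e [he0 hre]]|hn].
  by apply: (key e he0); apply: ev_mul0.
have hS : S0 r0.
  split => // e he0; apply/eqP => h; apply: hn; by exists e.
have [e [he0 [hre hact]]] := S0_surj hf hS hc.
apply: (key e he0).
by rewrite ev_mul /skew_prod hre /= hact ev_XsubC subrr mul0r.
Qed.

Lemma S0_1 : S0 1.
Proof. by split; rewrite ?oner_neq0 // => c _; rewrite -polyC1 evC oner_neq0. Qed.

Lemma S0_mul s t : S0 s -> S0 t -> S0 (sm s t).
Proof.
move=> [s0 hs] [t0 ht]; split; first exact: smul_neq0.
move=> c hc; rewrite ev_mul /skew_prod (ht c hc) /=.
apply: mulf_neq0K; last exact: ht.
by apply: hs; apply: inD_act => //; exact: ht.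
Qed.

Lemma S0_rdiv s q d : S0 s -> s = sm q d -> d != 0 -> S0 d.
Proof.
move=> [s0 hs] e d0; split => // c hc; apply/eqP => h.
by move/eqP: (hs c hc); apply; rewrite e ev_mul0.
Qed.

Lemma S0_Ore f : Fgood f -> left_Ore sigma delta S0.
Proof.
move=> hf; split; first exact: S0_1.
split; first by move=> s [].
split; first by move=> s t; apply: S0_mul.
move=> s r hs; have s0 : s != 0 by case: hs.
set L := fun x => exists m, sm x r = sm m s.
have [mu [nu [hmu e]]] := GO r s0.
have [l [[ml hml] [hl0 hmin]]] := min_size (Pr := L) (ex_intro _ mu (conj (ex_intro _ nu e) hmu)).
have hRl : forall x, L x -> rdvd x l.
  move=> x [mx hmx]; have [q [rho [ex hrho]]] := sdivP x hl0.
  case: (eqVneq rho 0) => h0; first by exists q; rewrite ex h0 addr0.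
  have : L rho.
    exists (mx - sm q ml).
    have -> : rho = x - sm q l by rewrite ex addrC addKr.
    by rewrite smulBl hmx smulA hml smulBl smulA.
  by move=> hL; move: (hmin rho hL h0); rewrite leqNgt hrho.
exists l, ml; split => //.
split => // c hc; apply/eqP => hlc.
have [l1 el] := ev_root hlc.
set h := sm ('X - c%:P) r.
have [d [al [be [ed [hd0 [[q1 hq1] [q2 hq2]]]]]]] := gcrdP h s0.
have hSd : S0 d by apply: (S0_rdiv hs hq1).
have [q3 hq3] := CL hf hSd hc (ex_intro _ q2 hq2).
set M := sm (sm q3 be) ('X - c%:P).
have hL : L (1 - M).
  exists (sm q3 al).
  rewrite smulBl smul1l /M smulA -/h {1}hq3 ed smulDr !smulA.
  by rewrite addrK.
have [z hz] := hRl _ hL.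
have := congr1 (fun p => ev p c) hz; rewrite /= el -smulA ev_factor evB -polyC1 evC /M ev_factor subr0.
by move/eqP; rewrite oner_eq0.
Qed.

Lemma S0_irr f : Fgood f -> irr_factors_defined sigma delta a S0.
Proof.
move=> hf P [P0 hP] Q Q1 Q2 hmon _ eP.
have Q0 : Q != 0 by apply: monic_neq0.
have hQQ2 : S0 (sm Q Q2).
  apply: (S0_rdiv (q := Q1) (conj P0 hP)); first by rewrite eP smulA.
  apply/eqP => h; move: P0; by rewrite eP smulA h smul0r eqxx.
have hQ2 : S0 Q2.
  apply: (S0_rdiv (q := Q) hQQ2) => //.
  by apply/eqP => h; move: hQQ2 => [+ _]; rewrite h smul0r eqxx.
have hSQ : S0 Q.
  split => // dd hdd; have [c [hc [hQ2c hact]]] := S0_surj hf hQ2 hdd.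
  apply/eqP => h; move: (hQQ2.2 c hc); rewrite ev_mul /skew_prod hQ2c /= hact h mul0r.
  by rewrite eqxx.
exists Q, 1; split; last exact: S0_skinv hf hSQ.
split => //; split.
  by exists 1, 1; rewrite /= smul1l; split => //; split.
move=> P1 Q1' hP1 [u [u' [e1 [e2 e3]]]]; move: e1 e2 e3 => /= e1 e2 e3.
have u0 : u != 0 by apply/eqP => h; move: e2; rewrite h smul0l eqxx.
rewrite smul1r in e3.
move: e1; rewrite -e3 smulA => /(smulI u0) eP1.
have hQ1' : Q1' != 0 by apply/eqP => h; move: hP1; rewrite eP1 h smul0l eqxx.
by rewrite eP1; apply: size_smul_ger.
Qed.

Lemma const_unit (A : {poly K}) : size A = 1%N -> sunit sigma delta A.
Proof.
move=> hs; have A0 : A != 0 by rewrite -size_poly_gt0 hs.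
have [eA hk] := size1_const (eq_leq hs) A0.
set k := A`_0 in eA hk; rewrite eA; exists (k^-1)%:P.
by split; rewrite smulC -mul_polyC -polyCM ?divrr ?mulVr ?unitK // polyC1.
Qed.

Lemma XsubC_irr c : sirreducible sigma delta ('X - c%:P).
Proof.
split; first exact: XsubC_neq0.
split.
  move=> [V [e1 e2]].
  have V0 : V != 0 by apply/eqP => h; move: e1; rewrite h smul0r => /eqP; rewrite eq_sym oner_eq0.
  by have := size_smul_gel (XsubC_neq0 c) V0; rewrite e1 size_poly1 size_XsubC.
move=> A B e.
have A0 : A != 0 by apply/eqP => h; move: (XsubC_neq0 c); rewrite e h smul0l eqxx.
have B0 : B != 0 by apply/eqP => h; move: (XsubC_neq0 c); rewrite e h smul0r eqxx.
have [h1 _] := size_smul A0 B0; rewrite -e size_XsubC in h1.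
have := size_poly_gt0 A; rewrite A0 => /= hA.
have := size_poly_gt0 B; rewrite B0 => /= hB.
have h1' : 2%N = (size A + size B - 1)%N by rewrite subn1 -h1.
case: (eqVneq (size A) 1%N) => hA1; first by left; apply: const_unit.
by right; apply: const_unit; apply: (arith2 h1' hA hB hA1).
Qed.

Lemma irr_sub S' : left_Ore sigma delta S' -> irr_factors_defined sigma delta a S' ->
  forall P, S' P -> S0 P.
Proof.
move=> [_ [hnz _]] hirr P hP; split; first exact: hnz.
move=> c hc; apply/eqP => hPc.
have [Q1 eQ] := ev_root hPc.
have := hirr P hP ('X - c%:P) Q1 1 (monicXsubC c) (XsubC_irr c).
rewrite smul1r => /(_ eQ) [P0 [Q0 [[hmon [[u [u' [e1 [e2 e3]]]] _]] [g hg]]]].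
move: e1 e2 e3 => /= e1 e2 e3.
have u0 : u != 0 by apply/eqP => h; move: e2; rewrite h smul0l eqxx.
rewrite smul1r in e3.
move: e1; rewrite -e3 smulA => /(smulI u0) eP0.
have [_ h2] := hg c hc.
by move: h2; rewrite /skew_prod eP0 ev_factor eqxx => /eqP; rewrite eq_sym oner_eq0.
Qed.

Lemma frac_sym (A1 A2 : {poly K} * {poly K}) : frac_eq sigma delta A1 A2 -> frac_eq sigma delta A2 A1.
Proof.
case: A1 A2 => P Q [P' Q'] [u [u' [e1 [e2 e3]]]].
by exists u', u; rewrite -e1 -e3.
Qed.

Lemma frac_trans (A1 A2 A3 : {poly K} * {poly K}) :
  frac_eq sigma delta A1 A2 -> frac_eq sigma delta A2 A3 -> frac_eq sigma delta A1 A3.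
Proof.
case: A1 A2 A3 => P1 Q1 [P2 Q2] [P3 Q3] [al [al' [a1 [a2 a3]]]] [be [be' [b1 [b2 b3]]]].
move: a1 a2 a3 b1 b2 b3 => /= a1 a2 a3 b1 b2 b3.
have be0 : be != 0 by apply/eqP => h; move: b2; rewrite h smul0l eqxx.
have [mu [nu [hmu e]]] := GO al' be0.
exists (sm mu al), (sm nu be'); rewrite /=.
split; first by rewrite smulA a1 -smulA e smulA b1 smulA.
split; first by rewrite smulA; apply: smul_neq0.
by rewrite smulA a3 -smulA e smulA b3 smulA.
Qed.

Lemma min_rep_exists P Q : P != 0 -> exists P0 Q0, minimal_rep sigma delta P Q P0 Q0.
Proof.
move=> hP.
have hw : exists p, (exists Q1, frac_eq sigma delta (p, Q1) (P, Q)) /\ p != 0.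
  by exists P; split => //; exists Q, 1, 1; rewrite /= smul1l.
have [l [[Q1 hfe] [hl0 hmin]]] := min_size hw.
set ll := lead_coef l.
have hll : ll != 0 by rewrite lead_coef_eq0.
have [hs1 hs2] := size_scaleK (invr_neq0K hll) hl0.
exists (ll^-1 *: l), (ll^-1 *: Q1); split.
  by rewrite monicE hs2 mulVr ?unitK.
split.
  apply: frac_trans hfe; exists ll%:P, 1; rewrite /= !smulC !scalerA divrr ?unitK // !scale1r.
  by split.
by move=> P1 Q1' hP1 hfe'; rewrite hs1; apply: hmin => //; exists Q1'.
Qed.

Lemma S0_min f P Q P0 Q0 P' Q' : Fgood f -> minimal_rep sigma delta P Q P0 Q0 ->
  S0 P' -> frac_eq sigma delta (P', Q') (P, Q) -> S0 P0.
Proof.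
move=> hf [hmon [hfe0 hmin]] [hP'0 hP'] hfe.
have P00 : P0 != 0 by apply: monic_neq0.
have [g [g' [g1 [g2 g3]]]] := frac_trans hfe (frac_sym hfe0).
move: g1 g2 g3 => /= g1 g2 g3.
have hg0 : g != 0 by apply/eqP => h; move: g2; rewrite h smul0l eqxx.
have [q [rho [e hrho]]] := sdivP P' P00.
case: (eqVneq rho 0) => hr.
  split => // c hc; apply/eqP => h; move/eqP: (hP' c hc); apply.
  by rewrite e hr addr0 ev_mul0.
exfalso.
have : frac_eq sigma delta (rho, Q' - sm q Q0) (P, Q).
  apply: frac_trans hfe0.
  exists g, (g' - sm g q); rewrite /=.
  have erho : rho = P' - sm q P0 by rewrite e addrC addKr.
  split; first by rewrite erho smulBr g1 smulBl smulA.
  split; first exact: smul_neq0.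
  by rewrite smulBr g3 smulBl smulA.
by move/(hmin _ _ hr); rewrite leqNgt hrho.
Qed.


Theorem main_sec (halg : sd_algebraic sigma delta a) :
  (exists S : {poly K} -> Prop, is_Sa sigma delta a S) /\
  forall S : {poly K} -> Prop, is_Sa sigma delta a S ->
    (forall P : {poly K}, P != 0 ->
       (S P <-> forall c : K, inDelta sigma delta a c -> seval sigma delta P c != 0)) /\
    (forall P Q : {poly K}, P != 0 ->
       ((exists P' Q' : {poly K}, S P' /\ frac_eq sigma delta (P', Q') (P, Q)) <->
        defined_at sigma delta a P Q)).
Proof.
have [f hf] : exists f, Fgood f by have [f [h1 [h2 h3]]] := existsW halg; exists f.
have hSa : is_Sa sigma delta a S0.
  split; first exact: S0_Ore hf.
  split; first exact: S0_irr hf.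
  by move=> S' hO hI _; apply: irr_sub.
split; first by exists S0.
move=> S [hO [hI hmax]].
have hSS0 := irr_sub hO hI.
have hS0S : forall P, S0 P -> S P := hmax S0 (S0_Ore hf) (S0_irr hf) hSS0.
split.
  move=> P hP; split; first by move=> h; case: (hSS0 P h).
  by move=> h; apply: hS0S.
move=> P Q hP; split.
  move=> [P' [Q' [hSP hfe]]].
  have [P0 [Q0 hmr]] := min_rep_exists Q hP.
  exists P0, Q0; split => //.
  apply: (S0_skinv hf); apply: (S0_min hf hmr (hSS0 _ hSP) hfe).
move=> [P0 [Q0 [hmr [g hg]]]].
exists P0, Q0; split; last by case: hmr => _ [].
apply: hS0S; split; first by case: hmr => hm _; apply: monic_neq0.
move=> c hc; apply/eqP => h; have [_ h2] := hg c hc.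
by move: h2; rewrite /skew_prod h eqxx => /eqP; rewrite eq_sym oner_eq0.
Qed.

End Skew.

Unset Implicit Arguments.

Theorem theorem3p10 (K : unitRingType)
  (K_skewfield : forall x : K, x != 0 -> x \is a GRing.unit)
  (sigma : {rmorphism K -> K}) (delta : K -> K)
  (delta_add : forall x y : K, delta (x + y) = delta x + delta y)
  (delta_mul : forall x y : K, delta (x * y) = sigma x * delta y + delta x * y)
  (a : K) (halg : sd_algebraic sigma delta a) :
  (exists S : {poly K} -> Prop, is_Sa sigma delta a S) /\
  forall S : {poly K} -> Prop, is_Sa sigma delta a S ->
    (forall P : {poly K}, P != 0 ->
       (S P <-> forall c : K, inDelta sigma delta a c -> seval sigma delta P c != 0)) /\
    (forall P Q : {poly K}, P != 0 ->
       ((exists P' Q' : {poly K}, S P' /\ frac_eq sigma delta (P', Q') (P, Q)) <->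
        defined_at sigma delta a P Q)).
Proof.
exact: (main_sec K_skewfield delta_add delta_mul halg).
Qed.
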